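(* Let $M$ be a sparse paving matroid of rank $r$, and let $B_1$ and $B_2$ be disjoint bases of $M$. Then there is a cyclic ordering $(b_1,b_2,\dots,b_r,b_{r+1},\dots,b_{2r})$ of $B_1\cup B_2$ with $B_1=\{b_1,\dots,b_r\}$ and $B_2=\{b_{r+1},\dots,b_{2r}\}$ such that every set of $r$ cyclically-consecutive elements of this cyclic ordering is a basis of $M$.
   Context: A matroid $M$ of rank $r$ is sparse paving if every nonspanning circuit is a hyperplane; equivalently, every $r$-subset of $E(M)$ is a basis or a circuit-hyperplane. *)

(* Defs.v *)
From mathcomp Require Import all_boot.
Set Implicit Arguments. Unset Strict Implicit. Unset Printing Implicit Defensive.

Record matroid (T : finType) := Matroid {
  bases : {set {set T}};
  bases_nonempty : bases != set0;
  bases_exchange : forall B1 B2, B1 \in bases -> B2 \in bases ->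
    forall x, x \in B1 :\: B2 ->
    exists2 y, y \in B2 :\: B1 & (y |: (B1 :\ x)) \in bases
}.

Section MatroidNotions.
Variables (T : finType) (M : matroid T).

Definition is_basis (B : {set T}) : bool := B \in bases M.

Definition indep (I : {set T}) : bool := [exists B, is_basis B && (I \subset B)].

Definition rk (X : {set T}) : nat :=
  \max_(I : {set T} | indep I && (I \subset X)) #|I|.

Definition mrank : nat := rk setT.

Definition spanning (X : {set T}) : bool := rk X == mrank.

Definition circuit (C : {set T}) : bool :=
  ~~ indep C && [forall x in C, indep (C :\ x)].

Definition hyperplane (H : {set T}) : bool :=
  ~~ spanning H && [forall x in ~: H, spanning (x |: H)].

Definition sparse_paving : Prop :=
  forall C, circuit C -> ~~ spanning C -> hyperplane C.

End MatroidNotions.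

(* Main.v *)
Require Import Defs.
From mathcomp Require Import all_boot zify.
Set Implicit Arguments. Unset Strict Implicit. Unset Printing Implicit Defensive.

Ltac bsimp :=
  repeat match goal with
  | H : is_true (?p != ?q) |- context [?p == ?q] => rewrite (negbTE H)
  | H : is_true (?p != ?q) |- context [?q == ?p] => rewrite [q == p]eq_sym (negbTE H)
  | H : is_true (?p \in ?A) |- context [?p \in ?A] => rewrite H
  | H : is_true (?p \notin ?A) |- context [?p \in ?A] => rewrite (negbTE H)
  | H : is_true (~~ (?p \in ?A)) |- context [?p \in ?A] => rewrite (negbTE H)
  | |- context [?p == ?p] => rewrite eqxx
  end.

Ltac ssolve :=
  let z := fresh "z" in
  apply/setP => z; rewrite !inE;
  repeat match goal with
  | |- context [z == ?p] => case: (eqVneq z p) => [->|?]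
  end; bsimp; rewrite /= ?andbT ?andbF ?orbT ?orbF //;
  repeat match goal with
  | |- context [z \in ?A] => case: (z \in A) => //
  | |- context [z == ?p] => case: (z == p) => //
  end.

Section Mat.
Variables (T : finType) (M : matroid T).

Lemma basis_card B B' : is_basis M B -> is_basis M B' -> #|B| = #|B'|.
Proof.
move=> hB hB'; move Hn: #|B :\: B'| => n.
elim: n B hB Hn => [|n IH] B hB Hn.
  have sBB': B \subset B' by rewrite -setD_eq0 -cards_eq0 Hn.
  suff ->: B = B' by [].
  apply/eqP; rewrite eqEsubset sBB' /=; apply/subsetP => x xB'.
  apply/negPn/negP => xB.
  have [|y] := @bases_exchange _ M B' B hB' hB x; first by rewrite inE xB xB'.
  by move: sBB'; rewrite -setD_eq0 => /eqP ->; rewrite inE.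
have : 0 < #|B :\: B'| by rewrite Hn.
rewrite card_gt0 => /set0Pn [x xD].
have [y yD hB2] := bases_exchange hB hB' xD.
move: xD yD; rewrite !inE => /andP [xB' xB] /andP [yB yB'].
rewrite -(IH _ hB2).
  rewrite cardsU1 !inE negb_and negbK yB orbT /= (cardsD1 x B) xB //.
apply/eqP; rewrite -eqSS -Hn (cardsD1 x (B :\: B')) !inE xB xB' /= eqSS.
apply/eqP; suff ->: (y |: B :\ x) :\: B' = (B :\: B') :\ x by []; have xy : x != y by apply/eqP=> e; move: xB; rewrite e (negbTE yB).
by ssolve.
Qed.

Lemma basis_indep B : is_basis M B -> indep M B.
Proof. by move=> hB; apply/existsP; exists B; rewrite hB subxx. Qed.

Lemma indep_le I B : indep M I -> is_basis M B -> #|I| <= #|B|.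
Proof.
case/existsP => B' /andP [hB' sIB'] hB; rewrite -(basis_card hB' hB).
exact: subset_leq_card.
Qed.

Lemma indep_eq_basis I B : indep M I -> is_basis M B -> #|B| <= #|I| -> is_basis M I.
Proof.
case/existsP => B' /andP [hB' sIB'] hB le.
have -> // : I = B'.
apply/eqP; rewrite eqEcard sIB' /= (basis_card hB' hB) //.
Qed.

Lemma rk_ge I (X : {set T}) : indep M I -> I \subset X -> #|I| <= rk M X.
Proof. by move=> hI hIX; rewrite /rk; apply: leq_bigmax_cond; rewrite hI hIX. Qed.

Lemma rk_le (X : {set T}) B : is_basis M B -> rk M X <= #|B|.
Proof. by move=> hB; apply/bigmax_leqP => I /andP [hI _]; apply: indep_le. Qed.

Lemma mrankE B : is_basis M B -> mrank M = #|B|.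
Proof.
move=> hB; apply/eqP; rewrite eqn_leq rk_le //=.
by apply: rk_ge; [apply: basis_indep | apply: subsetT].
Qed.

Lemma indep0 : indep M set0.
Proof.
have /set0Pn [B hB] := bases_nonempty M.
by apply/existsP; exists B; rewrite /is_basis hB sub0set.
Qed.

Lemma rk_lt (X : {set T}) B : is_basis M B -> (forall B', is_basis M B' -> ~~ (B' \subset X)) ->
  rk M X < #|B|.
Proof.
move=> hB hX.
have h : forall I, indep M I && (I \subset X) -> #|I| < #|B|.
  move=> I /andP [hI hIX]; rewrite ltnNge; apply/negP => le.
  by move: (hX _ (indep_eq_basis hI hB le)); rewrite hIX.
have n0 : 0 < #|B|.
  by have := h set0; rewrite indep0 sub0set cards0; apply.
rewrite -(prednK n0) ltnS; apply/bigmax_leqP => I hI.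
by rewrite -ltnS prednK //; apply: h.
Qed.

Lemma spanning_basis (X : {set T}) B B' : is_basis M B -> is_basis M B' -> B' \subset X ->
  spanning M X.
Proof.
move=> hB hB' sub; rewrite /spanning (mrankE hB) eqn_leq rk_le //=.
by rewrite -(basis_card hB' hB); apply: rk_ge => //; apply: basis_indep.
Qed.

Lemma spanning_ex (X : {set T}) B : is_basis M B -> spanning M X -> exists2 B', is_basis M B' & B' \subset X.
Proof.
move=> hB; rewrite /spanning (mrankE hB) => /eqP e.
case: (boolP [exists B', is_basis M B' && (B' \subset X)]).
  by case/existsP => B' /andP [h1 h2]; exists B'.
move=> /existsPn hn.
have := rk_lt (X := X) hB; rewrite e ltnn => H; exfalso; apply: notF; apply: H.
by move=> B' hB'; move: (hn B'); rewrite hB'.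
Qed.

Lemma exists_circuit (D : {set T}) : ~~ indep M D -> exists2 C, circuit M C & C \subset D.
Proof.
move Hk: #|D| => k; elim: k D Hk => [|k IH] D Hk hD.
  by move: Hk => /eqP; rewrite cards_eq0 => /eqP e; move: hD; rewrite e indep0.
case: (boolP [forall x in D, indep M (D :\ x)]) => hall.
  by exists D; rewrite // /circuit hD hall.
move: hall => /forall_inPn [x xD hx].
have [|C hC sC] := IH (D :\ x) _ hx.
  by move: Hk; rewrite (cardsD1 x D) xD add1n => [[]].
by exists C; rewrite // (subset_trans sC) // subD1set.
Qed.

Lemma sub_basis_eq B' (N : {set T}) B : is_basis M B -> is_basis M B' -> B' \subset N ->
  #|N| = #|B| -> B' = N.
Proof.
move=> hB hB' sub cN; apply/eqP; rewrite eqEcard sub /= cN (basis_card hB' hB) //.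
Qed.

Lemma nonbasis_ch (N : {set T}) B : is_basis M B -> sparse_paving M -> #|N| = #|B| ->
  ~~ is_basis M N ->
  (forall x, x \in N -> indep M (N :\ x)) /\
  (forall y, y \notin N -> exists2 B', is_basis M B' & B' \subset y |: N).
Proof.
move=> hB hsp cN hN.
have nspan : forall Z : {set T}, Z \subset N -> ~~ spanning M Z.
  move=> Z sZ; apply/negP => /(spanning_ex hB) [B' hB' sB'].
  have e := sub_basis_eq hB hB' (subset_trans sB' sZ) cN.
  by move: hN; rewrite -e hB'.
have nind : ~~ indep M N.
  by apply/negP => hI; move: hN; rewrite (indep_eq_basis hI hB) // cN.
have [C hC sC] := exists_circuit nind.
have hH := hsp C hC (nspan C sC).
move: (hH) => /andP [_ /forall_inP hH2].
have eC : C = N.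
  apply/eqP; rewrite eqEsubset sC /=; apply/subsetP => x xN.
  apply/negPn/negP => xC.
  have := hH2 x; rewrite inE => /(_ xC) hs.
  by move: (nspan (x |: C)); rewrite hs subUset sub1set xN sC => /(_ isT).
move: hC hH; rewrite eC => /andP [_ /forall_inP hc] /andP [_ /forall_inP hh].
split; first by [].
by move=> y yN; apply: (spanning_ex hB); apply: hh; rewrite inE.
Qed.


Lemma keyM (X : {set T}) a b B : is_basis M B -> sparse_paving M -> #|X| = #|B| ->
  a \in X -> b \notin X -> is_basis M X || is_basis M (b |: (X :\ a)).
Proof.
move=> hB hsp cX aX bX.
apply/negPn/negP; rewrite negb_or => /andP [hX hX'].
have [hc hh] := nonbasis_ch hB hsp cX hX.
have [I hI sI] := hh b bX.
have ab : a != b by apply/eqP => e; move: bX; rewrite -e aX.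
have cbX : #|b |: X| = #|B|.+1 by rewrite cardsU1 bX cX.
have cN' : #|b |: (X :\ a)| = #|B|.
  by rewrite cardsU1 !inE negb_and bX orbT -cX (cardsD1 a X) aX.
have : ~~ (b |: X \subset I).
  apply/negP => s; have := subset_leq_card s.
  by rewrite cbX (basis_card hI hB) ltnn.
case/subsetPn => z zbX zI.
have sIz : I \subset (b |: X) :\ z.
  apply/subsetP => w wI; rewrite in_setD1 (subsetP sI) // andbT.
  by apply/eqP => e; move: zI; rewrite -e wI.
have zb : z != b.
  apply/eqP => e; subst z.
  have sIX : I \subset X.
    apply: (subset_trans sIz); apply/subsetP => w; rewrite !inE.
    by case/andP => /negPf -> .
  by move: hX; rewrite -(sub_basis_eq hB hI sIX cX) hI.
have za : z != a.
  apply/eqP => e; subst z.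
  have sIN : I \subset b |: (X :\ a).
    apply: (subset_trans sIz); apply/subsetP => w; rewrite !inE.
    by case/andP => -> ->.
  by move: hX'; rewrite -(sub_basis_eq hB hI sIN cN') hI.
have [B' hB' sKB'] : exists2 B', is_basis M B' & X :\ a \subset B'.
  by have /existsP [B' /andP [h1 h2]] := hc a aX; exists B'.
have : ~~ (B' \subset X :\ a).
  apply/negP => s; have := subset_leq_card s.
  by rewrite (basis_card hB' hB) -cX (cardsD1 a X) aX add1n ltnn.
case/subsetPn => t tB' tK.
have eB' : B' = t |: (X :\ a).
  apply/eqP; rewrite eq_sym eqEcard subUset sub1set tB' sKB' /=.
  by rewrite cardsU1 tK (basis_card hB' hB) -cX (cardsD1 a X) aX.
have tb : t != b.
  by apply/eqP => e; move: hX'; rewrite -e -eB' hB'.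
have ta : t != a.
  apply/eqP => e; move: hX; suff <- : B' = X by rewrite hB'.
  by rewrite eB' e setD1K.
have tX : t \notin X.
  by move: tK; rewrite !inE ta.
have tI : t \notin I.
  by apply/negP => /(subsetP sI); rewrite !inE (negbTE tb) (negbTE tX).
have [|u] := bases_exchange hB' hI (x := t); first by rewrite inE tI tB'.
rewrite inE => /andP [uB' uI].
have -> : B' :\ t = X :\ a.
  by rewrite eB' setU1K.
move: (subsetP sIz u uI); rewrite !inE => /andP [uz].
case/orP => [/eqP eu|uX]; first by subst u; move=> h; move: hX'; rewrite /is_basis h.
have eu : u = a.
  by apply/eqP; apply/negPn/negP => ua; move: uB'; rewrite eB' !inE ua uX orbT.
by subst u; rewrite setD1K // => h; move: hX; rewrite /is_basis h.
Qed.

End Mat.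

Definition mv (T : finType) (X : {set T}) (a b : T) := b |: (X :\ a).

Section Comb.
Variables (T : finType) (good : {set T} -> bool) (r : nat) (B1 B2 : {set T}).
Hypotheses (gB1 : good B1) (gB2 : good B2) (cB1 : #|B1| = r) (cB2 : #|B2| = r)
  (dis : [disjoint B1 & B2])
  (key : forall (X : {set T}) a b, #|X| = r -> a \in X -> b \notin X -> good X || good (mv X a b)).

Notation E := (B1 :|: B2).
Implicit Types (X Y Z : {set T}) (a b u v x y z : T).

Lemma d12 z : z \in B1 -> z \notin B2.
Proof. by move=> h; rewrite (disjointFr dis h). Qed.

Lemma card_mv X a b : a \in X -> b \notin X -> #|mv X a b| = #|X|.
Proof.
move=> aX bX; rewrite /mv cardsU1 !inE negb_and bX orbT (cardsD1 a X) aX.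
by rewrite add1n.
Qed.

Lemma mv_sub X a b : X \subset E -> b \in E -> mv X a b \subset E.
Proof.
move=> sX bE; rewrite /mv subUset sub1set bE /=.
by apply: subset_trans sX; apply: subD1set.
Qed.

Lemma cardE : #|E| = r + r.
Proof. by rewrite cardsU (disjoint_setI0 dis) cards0 subn0 cB1 cB2. Qed.

Lemma cardC X : X \subset E -> #|X| = r -> #|E :\: X| = r.
Proof. by move=> sX cX; rewrite cardsDS // cardE cX addnK. Qed.

Lemma cardRB X : X \subset E -> #|X| = r -> #|B2 :\: X| = #|X :&: B1|.
Proof.
move=> sX cX.
have eXB : X :\: B1 = X :&: B2.
  apply/setP => z; rewrite !inE; case zX: (z \in X); last by rewrite !andbF.
  move: (subsetP sX z zX); rewrite !inE !andbT.
  by case zB1: (z \in B1) => //= _; rewrite (negbTE (d12 zB1)).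
have h1 := cardsID B1 X; have h2 := cardsID X B2.
rewrite eXB cX in h1; rewrite cB2 setIC in h2; lia.
Qed.

Lemma cmv X a b : a \in X -> a \in B1 -> b \in B2 -> b \notin X ->
  E :\: mv X a b = mv (E :\: X) b a.
Proof.
move=> aX aB1 bB2 bX; have aB2 := d12 aB1.
have ab : a != b by apply/eqP => e; move: aB2; rewrite e bB2.
rewrite /mv; ssolve.
Qed.

Lemma mvB1 X a b : a \in B1 -> b \in B2 -> mv X a b :&: B1 = (X :&: B1) :\ a.
Proof.
move=> aB1 bB2; have bB1 : b \notin B1 by apply/negP => /d12; rewrite bB2.
rewrite /mv; ssolve.
Qed.


Definition W X (ta tb : seq T) k :=
  [set x in drop k ta] :|: (X :&: B2) :|: [set x in take k tb].

Definition completable X := exists ta tb : seq T,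
  [/\ uniq ta && uniq tb, size ta = size tb,
      [set x in ta] = X :&: B1, [set x in tb] = B2 :\: X &
      forall k, k <= size ta -> good (W X ta tb k) && good (E :\: W X ta tb k)].

Lemma step X a b : X \subset E -> a \in X -> a \in B1 -> b \in B2 -> b \notin X ->
  good X -> good (E :\: X) -> completable (mv X a b) -> completable X.
Proof.
move=> sX aX aB1 bB2 bX gX gY [ta [tb [/andP [u1 u2] sz sa sb hk]]].
have aB2 := d12 aB1.
have bB1 : b \notin B1 by apply/negP => /d12; rewrite bB2.
have ab : a != b by apply/eqP => e; move: aB2; rewrite e bB2.
have sa' z : (z \in ta) = (z \in mv X a b :&: B1) by rewrite -sa inE.
have sb' z : (z \in tb) = (z \in B2 :\: mv X a b) by rewrite -sb inE.
exists (a :: ta), (b :: tb); split => //=.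
- apply/andP; split.
  by rewrite u1 andbT sa' /mv !inE eqxx /= (negbTE ab).
  by rewrite u2 andbT sb' /mv !inE eqxx.
- by rewrite sz.
- apply/setP => z; rewrite !inE sa' /mv !inE.
  case: (eqVneq z a) => [->|za]; first by rewrite aX aB1.
  case: (eqVneq z b) => [->|zb] /=; first by rewrite (negbTE bB1) (negbTE bX) ?andbF.
  by [].
- apply/setP => z; rewrite !inE sb' /mv !inE.
  case: (eqVneq z b) => [->|zb] /=; first by rewrite bX bB2.
  by case: (eqVneq z a) => [->|za] /=; rewrite ?(negbTE aB2) ?andbF.
case=> [|k] hk'.
  suff -> : W X (a :: ta) (b :: tb) 0 = X by rewrite gX gY.
  apply/setP => z; rewrite /W !inE sa' /mv !inE.
  case: (eqVneq z a) => [->|za] /=; first by rewrite aX.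
  case: (eqVneq z b) => [->|zb] /=; first by rewrite (negbTE bB1) (negbTE bX).
  case zX: (z \in X); rewrite /= ?andbF ?orbF //.
  by move: (subsetP sX z zX); rewrite inE orbC.
suff -> : W X (a :: ta) (b :: tb) k.+1 = W (mv X a b) ta tb k by apply: hk.
rewrite /W /mv /=; ssolve.
Qed.


Lemma compB2 : completable B2.
Proof.
exists [::], [::]; split => //.
- apply/setP => z; rewrite !inE.
  by case zB1: (z \in B1); rewrite ?andbF //= (negbTE (d12 zB1)).
- by apply/setP => z; rewrite !inE andNb.
case=> // _.
suff -> : W B2 [::] [::] 0 = B2.
  suff -> : E :\: B2 = B1 by rewrite gB2 gB1.
  apply/setP => z; rewrite !inE; case zB1: (z \in B1) => /=.
    by rewrite (negbTE (d12 zB1)).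
  by case: (z \in B2).
by rewrite /W /=; ssolve.
Qed.

Lemma L0 X : X \subset E -> #|X| = r -> X :&: B1 = set0 -> X = B2.
Proof.
move=> sX cX e; apply/eqP; rewrite eqEcard cX cB2 leqnn andbT.
apply/subsetP => z zX; move: (subsetP sX z zX); rewrite inE.
case/orP => // zB1; move: e => /setP /(_ z); rewrite !inE zX zB1.
by [].
Qed.

Lemma comp1 X : X \subset E -> #|X| = r -> #|X :&: B1| = 1 ->
  good X -> good (E :\: X) -> completable X.
Proof.
move=> sX cX c1 gX gY.
have /cards1P [a ea] : #|X :&: B1| == 1 by rewrite c1.
have := cardRB sX cX; rewrite c1 => /eqP /cards1P [b eb].
have : a \in X :&: B1 by rewrite ea set11.
rewrite inE => /andP [aX aB1].
have : b \in B2 :\: X by rewrite eb set11.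
rewrite inE => /andP [bX bB2].
apply: (step sX aX aB1 bB2 bX gX gY).
have -> : mv X a b = B2.
  apply: L0.
  - by apply: mv_sub => //; rewrite inE bB2 orbT.
  - by rewrite card_mv.
  by rewrite mvB1 // ea setDv.
exact: compB2.
Qed.

Lemma inj_bad Z a b b' : #|Z| = r -> a \in Z -> b \notin Z -> b' \notin Z -> b != b' ->
  good (mv Z a b) || good (mv Z a b').
Proof.
move=> cZ aZ bZ b'Z bb'.
have ab : a != b by apply/eqP => e; move: bZ; rewrite -e aZ.
have := key (X := mv Z a b) (a := b) (b := b').
rewrite card_mv // cZ => /(_ erefl).
have -> : mv (mv Z a b) b b' = mv Z a b' by rewrite /mv; ssolve.
by apply; rewrite /mv !inE; bsimp; rewrite ?andbF.
Qed.

Definition gm X a b := [&& a \in X, a \in B1, b \in B2, b \notin X,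
  good (mv X a b) & good (E :\: mv X a b)].

Lemma exists_gm X : X \subset E -> #|X| = r -> 3 <= #|X :&: B1| ->
  exists a b, gm X a b.
Proof.
move=> sX cX m3.
set m := #|X :&: B1| in m3.
have cRB : #|B2 :\: X| = m by rewrite cardRB.
have cY : #|E :\: X| = r by rewrite cardC.
set P := setX (X :&: B1) (B2 :\: X).
set bX := [set p in P | ~~ good (mv X p.1 p.2)].
set bY := [set p in P | ~~ good (E :\: mv X p.1 p.2)].
have hbX : #|bX| <= m.
  rewrite -(card_in_imset (f := fst)).
    apply: subset_leq_card; apply/subsetP => z /imsetP [p].
    by rewrite !inE => /andP [/and3P [/andP [h1 h2] _ _] _] ->; rewrite h1 h2.
  move=> [a1 b1] [a2 b2]; rewrite !inE /= => /andP [/and3P [/andP [a1X _] b1X _] g1].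
  move=> /andP [/and3P [_ b2X _] g2] e; subst a2.
  case: (eqVneq b1 b2) => [-> //|ne].
  by move: (inj_bad cX a1X b1X b2X ne); rewrite (negbTE g1) (negbTE g2).
have hbY : #|bY| <= m.
  rewrite -cRB -(card_in_imset (f := snd)).
    apply: subset_leq_card; apply/subsetP => z /imsetP [p].
    by rewrite !inE => /andP [/and3P [_ h1 h2] _] ->; rewrite h1 h2.
  move=> [a1 b1] [a2 b2]; rewrite !inE /= => /andP [/and3P [/andP [a1X a1B] b1X b1B] g1].
  move=> /andP [/and3P [/andP [a2X a2B] _ _] g2] e; subst b2.
  case: (eqVneq a1 a2) => [-> //|ne].
  rewrite cmv // in g1; rewrite cmv // in g2.
  have i1 : b1 \in E :\: X by rewrite !inE b1X b1B orbT.
  have i2 : a1 \notin E :\: X by rewrite !inE a1X.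
  have i3 : a2 \notin E :\: X by rewrite !inE a2X.
  move: (inj_bad cY i1 i2 i3 ne).
  by rewrite (negbTE g1) (negbTE g2).
case: (boolP (P \subset bX :|: bY)) => [sP|].
  have := subset_leq_card sP; rewrite cardsX cRB => h.
  have := leq_trans h (leq_trans (leq_card_setU bX bY) (leq_add hbX hbY)).
  move=> h2; exfalso; nia.
case/subsetPn => [[a b]]; rewrite !inE /= => /andP [/andP [aX aB1] /andP [bX' bB2]].
rewrite negb_or aX aB1 bX' bB2 /= !negbK => /andP [g1 g2].
by exists a, b; rewrite /gm aX aB1 bB2 bX' g1 g2.
Qed.


Lemma ne12 p q : p \in B1 -> q \in B2 -> p != q.
Proof. by move=> h1 h2; apply/eqP => e; move: (d12 h1); rewrite e h2. Qed.

Lemma pattern X ai bj u v x y :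
  X \subset E -> #|X| = r -> good X -> good (E :\: X) ->
  ai \in X -> ai \in B1 -> bj \in B2 -> bj \notin X ->
  mv X ai bj :&: B1 = [set u; v] -> B2 :\: mv X ai bj = [set x; y] ->
  u != v -> x != y ->
  ~~ good (mv (mv X ai bj) u x) -> ~~ good (mv (mv X ai bj) v y) ->
  ~~ good (E :\: mv (mv X ai bj) u y) -> ~~ good (E :\: mv (mv X ai bj) v x) ->
  completable X.
Proof.
move=> sX cX gX gY aiX aiB1 bjB2 bjX eA eB uv xy h1 h2 h3 h4.
have : u \in mv X ai bj :&: B1 by rewrite eA !inE eqxx.
have : v \in mv X ai bj :&: B1 by rewrite eA !inE eqxx orbT.
have : x \in B2 :\: mv X ai bj by rewrite eB !inE eqxx.
have : y \in B2 :\: mv X ai bj by rewrite eB !inE eqxx orbT.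
have aiB2 := d12 aiB1.
have bjB1 : bj \notin B1 by apply/negP => /d12; rewrite bjB2.
rewrite /mv !inE => /andP [hy yB2] /andP [hx xB2] /andP [hv vB1] /andP [hu uB1].
have uB2 := d12 uB1; have vB2 := d12 vB1.
have xB1 : x \notin B1 by apply/negP => /d12; rewrite xB2.
have yB1 : y \notin B1 by apply/negP => /d12; rewrite yB2.
have n1 := ne12 aiB1 bjB2; have n2 := ne12 aiB1 xB2; have n3 := ne12 aiB1 yB2.
have n4 := ne12 uB1 bjB2; have n5 := ne12 uB1 xB2; have n6 := ne12 uB1 yB2.
have n7 := ne12 vB1 bjB2; have n8 := ne12 vB1 xB2; have n9 := ne12 vB1 yB2.
move: hu hv hx hy; bsimp; rewrite /= => hu hv hx hy.
have uX : u \in X by case/andP: hu.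
have uai : u != ai by case/andP: hu.
have vX : v \in X by case/andP: hv.
have vai : v != ai by case/andP: hv.
move: hx hy; rewrite !negb_or => /andP [xbj xX] /andP [ybj yX].
set X1 := mv X ai x; set X2 := mv X1 u y.
have cX1 : #|X1| = r by rewrite card_mv.
have uX1 : u \in X1 by rewrite /X1 /mv !inE uai uX orbT.
have yX1 : y \notin X1 by rewrite /X1 /mv !inE; bsimp.
have bjX1 : bj \notin X1 by rewrite /X1 /mv !inE; bsimp.
have cX2 : #|X2| = r by rewrite card_mv.
have sX1 : X1 \subset E by apply: mv_sub; rewrite // inE xB2 orbT.
have sX2 : X2 \subset E by apply: mv_sub; rewrite // inE yB2 orbT.
have gX1 : good X1.
  have := key cX1 uX1 bjX1.
  have -> : mv X1 u bj = mv (mv X ai bj) u x by rewrite /X1 /mv; ssolve.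
  by rewrite (negbTE h1) orbF.
have gY1 : good (E :\: X1).
  have := key (X := E :\: X1) (a := bj) (b := v); rewrite cardC //.
  have -> : mv (E :\: X1) bj v = E :\: mv (mv X ai bj) v x by rewrite /X1 /mv; ssolve.
  rewrite (negbTE h4) orbF; apply => //.
    by rewrite /X1 /mv !inE; bsimp; rewrite ?orbT.
  by rewrite /X1 /mv !inE; bsimp; rewrite ?orbT.
have gX2 : good X2.
  have := key (X := X2) (a := y) (b := bj) cX2.
  have -> : mv X2 y bj = mv (mv X ai bj) u x by rewrite /X2 /X1 /mv; ssolve.
  rewrite (negbTE h1) orbF; apply.
    by rewrite /X2 /mv !inE eqxx.
  by rewrite /X2 /X1 /mv !inE; bsimp.
have gY2 : good (E :\: X2).
  have := key (X := E :\: X2) (a := bj) (b := x); rewrite cardC //.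
  have -> : mv (E :\: X2) bj x = E :\: mv (mv X ai bj) u y by rewrite /X2 /X1 /mv; ssolve.
  rewrite (negbTE h3) orbF; apply => //.
    by rewrite /X2 /X1 /mv !inE; bsimp.
  by rewrite /X2 /X1 /mv !inE; bsimp.
apply: (step sX aiX aiB1 xB2 xX gX gY).
apply: (step sX1 uX1 uB1 yB2 yX1 gX1 gY1).
apply: comp1 => //.
rewrite /X2 mvB1 // /X1 mvB1 // -(mvB1 X aiB1 bjB2) eA.
have -> : [set u; v] :\ u = [set v] by ssolve.
by rewrite cards1.
Qed.


Lemma inj_bad2 Z a a' b : #|Z| = r -> a \in Z -> a' \in Z -> b \notin Z -> a != a' ->
  good (mv Z a b) || good (mv Z a' b).
Proof.
move=> cZ aZ a'Z bZ aa'.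
have ab : a != b by apply/eqP => e; move: bZ; rewrite -e aZ.
have a'b : a' != b by apply/eqP => e; move: bZ; rewrite -e a'Z.
have := key (X := mv Z a b) (a := a') (b := a).
rewrite card_mv // cZ => /(_ erefl).
have -> : mv (mv Z a b) a' a = mv Z a' b by rewrite /mv; ssolve.
by apply; rewrite /mv !inE; bsimp.
Qed.

Lemma comp3 X : X \subset E -> #|X| = r -> #|X :&: B1| = 3 ->
  good X -> good (E :\: X) -> completable X.
Proof.
move=> sX cX c3 gX gY.
have [ai [bj /and5P [aiX aiB1 bjB2 bjX /andP [g1 g2]]]] := exists_gm sX cX (eq_leq (esym c3)).
set X' := mv X ai bj.
have bjE : bj \in E by rewrite inE bjB2 orbT.
have sX' : X' \subset E by apply: mv_sub.
have cX' : #|X'| = r by rewrite card_mv.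
have c2 : #|X' :&: B1| = 2.
  rewrite mvB1 //; have := cardsD1 ai (X :&: B1); rewrite in_setI aiX aiB1 c3 /= add1n.
  by case.
case: (boolP [exists a, exists b, gm X' a b]).
  case/existsP => a /existsP [b] /and5P [aX aB1 bB2 bX /andP [g3 g4]].
  apply: (step sX aiX aiB1 bjB2 bjX gX gY).
  apply: (step sX' aX aB1 bB2 bX g1 g2).
  apply: comp1 => //.
  - by apply: mv_sub => //; rewrite inE bB2 orbT.
  - by rewrite card_mv.
  rewrite mvB1 //; have := cardsD1 a (X' :&: B1); rewrite in_setI aX aB1 c2 /= add1n.
  by case.
move/existsPn => hn.
have nf : forall a b, a \in X' -> a \in B1 -> b \in B2 -> b \notin X' ->
    ~~ good (mv X' a b) || ~~ good (E :\: mv X' a b).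
  move=> a b aX aB1 bB2 bX; move: (hn a) => /existsPn /(_ b).
  by rewrite /gm aX aB1 bB2 bX /= negb_and.
have /cards2P [u [v [uv eA]]] : #|X' :&: B1| == 2 by rewrite c2.
have /cards2P [x [y [xy eB]]] : #|B2 :\: X'| == 2 by rewrite cardRB // c2.
have : u \in X' :&: B1 by rewrite eA !inE eqxx.
have : v \in X' :&: B1 by rewrite eA !inE eqxx orbT.
have : x \in B2 :\: X' by rewrite eB !inE eqxx.
have : y \in B2 :\: X' by rewrite eB !inE eqxx orbT.
rewrite !in_setI !in_setD => /andP [yX yB2] /andP [xX xB2] /andP [vX vB1] /andP [uX uB1].
have cY' : #|E :\: X'| = r by rewrite cardC.
have xY : x \in E :\: X' by rewrite in_setD xX in_setU xB2 orbT.
have yY : y \in E :\: X' by rewrite in_setD yX in_setU yB2 orbT.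
have uY : u \notin E :\: X' by rewrite in_setD uX.
have vY : v \notin E :\: X' by rewrite in_setD vX.
have cm a b : a \in X' -> a \in B1 -> b \in B2 -> b \notin X' ->
    E :\: mv X' a b = mv (E :\: X') b a by move=> *; apply: cmv.
have nf' a b : a \in X' -> a \in B1 -> b \in B2 -> b \notin X' ->
    good (mv X' a b) -> ~~ good (E :\: mv X' a b).
  by move=> h1 h2 h3 h4 h5; move: (nf a b h1 h2 h3 h4); rewrite h5.
have nf'' a b : a \in X' -> a \in B1 -> b \in B2 -> b \notin X' ->
    good (E :\: mv X' a b) -> ~~ good (mv X' a b).
  by move=> h1 h2 h3 h4 h5; move: (nf a b h1 h2 h3 h4); rewrite h5 orbF.
case: (boolP (good (mv X' u x))) => hux.
  have bYux := nf' u x uX uB1 xB2 xX hux.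
  have gYvx : good (E :\: mv X' v x).
    move: (inj_bad cY' xY uY vY uv); rewrite -!cm // (negbTE bYux) //.
  have gYuy : good (E :\: mv X' u y).
    move: (inj_bad2 cY' xY yY uY xy); rewrite -!cm // (negbTE bYux) //.
  have bvx := nf'' v x vX vB1 xB2 xX gYvx.
  have buy := nf'' u y uX uB1 yB2 yX gYuy.
  have gvy : good (mv X' v y).
    by move: (inj_bad cX' vX xX yX xy); rewrite (negbTE bvx).
  have bYvy := nf' v y vX vB1 yB2 yX gvy.
  apply: (pattern (u := u) (v := v) (x := y) (y := x) sX cX gX gY aiX aiB1 bjB2 bjX) => //.
  - by rewrite -/X' eB setUC.
  - by rewrite eq_sym.
have guy : good (mv X' u y).
  by move: (inj_bad cX' uX xX yX xy); rewrite (negbTE hux).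
have gvx : good (mv X' v x).
  by move: (inj_bad2 cX' uX vX xX uv); rewrite (negbTE hux).
have bYuy := nf' u y uX uB1 yB2 yX guy.
have bYvx := nf' v x vX vB1 xB2 xX gvx.
have gYvy : good (E :\: mv X' v y).
  move: (inj_bad cY' yY uY vY uv); rewrite -!cm // (negbTE bYuy) //.
have bvy := nf'' v y vX vB1 yB2 yX gYvy.
exact: (pattern (u := u) (v := v) (x := x) (y := y) sX cX gX gY aiX aiB1 bjB2 bjX).
Qed.


Lemma mainL m X : #|X :&: B1| = m -> X \subset E -> #|X| = r -> good X ->
  good (E :\: X) -> m != 2 -> completable X.
Proof.
elim: m X => [|m IH] X cm sX cX gX gY n2.
  have -> : X = B2 by apply: L0 => //; apply/eqP; rewrite -cards_eq0 cm.
  exact: compB2.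
case: m IH cm n2 => [|[|[|m]]] IH cm n2 //.
- exact: comp1.
- exact: comp3.
have h3 : 3 <= #|X :&: B1| by rewrite cm.
have [a [b /and5P [aX aB1 bB2 bX /andP [g1 g2]]]] := exists_gm sX cX h3.
apply: (step sX aX aB1 bB2 bX gX gY).
apply: IH => //.
- rewrite mvB1 //; have := cardsD1 a (X :&: B1); rewrite in_setI aX aB1 cm /= add1n.
  by case.
- by apply: mv_sub => //; rewrite inE bB2 orbT.
- by rewrite card_mv.
Qed.

Lemma compB1 : completable B1.
Proof.
have sB1 : B1 \subset E by apply: subsetUl.
have eB : E :\: B1 = B2.
  apply/setP => z; rewrite !inE; case zB1: (z \in B1) => /=.
    by rewrite (negbTE (d12 zB1)).
  by case: (z \in B2).
have cB : #|B1 :&: B1| = r by rewrite setIid.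
case: (eqVneq r 2) => [r2|n2]; last by apply: (mainL cB) => //; rewrite eB.
have /cards2P [u [v [uv eB1]]] : #|B1| == 2 by rewrite cB1 r2.
have /cards2P [x [y [xy eB2]]] : #|B2| == 2 by rewrite cB2 r2.
have uB1 : u \in B1 by rewrite eB1 !inE eqxx.
have vB1 : v \in B1 by rewrite eB1 !inE eqxx orbT.
have xB2 : x \in B2 by rewrite eB2 !inE eqxx.
have yB2 : y \in B2 by rewrite eB2 !inE eqxx orbT.
have xB1 : x \notin B1 by apply/negP => /d12; rewrite xB2.
have yB1 : y \notin B1 by apply/negP => /d12; rewrite yB2.
have n1 := ne12 uB1 xB2; have n3 := ne12 uB1 yB2.
have n4 := ne12 vB1 xB2; have n5 := ne12 vB1 yB2.
suff [b [bB2 bB1 g1 g2]] : exists b, [/\ b \in B2, b \notin B1, good (mv B1 u b) &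
    good (E :\: mv B1 u b)].
  apply: (step sB1 uB1 uB1 bB2 bB1 gB1) => //; first by rewrite eB.
  apply: comp1 => //.
  - by apply: mv_sub => //; rewrite inE bB2 orbT.
  - by rewrite card_mv.
  - rewrite mvB1 // setIid eB1.
    have -> : [set u; v] :\ u = [set v] by ssolve.
    by rewrite cards1.
have uB2 : u \notin B2 := d12 uB1.
have ex : E :\: mv B1 u x = mv B2 x u by rewrite cmv // eB.
have ey : E :\: mv B1 u y = mv B2 y u by rewrite cmv // eB.
have i4 : good (E :\: mv B1 u x) || good (E :\: mv B1 u y).
  by rewrite ex ey; apply: inj_bad2.
have i1 : good (mv B1 u x) || good (mv B1 u y) by apply: inj_bad.
have i2 : good (mv B1 u x) || good (E :\: mv B1 u y).
  have := key (X := mv B1 u x) (a := v) (b := u).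
  rewrite card_mv // cB1 => /(_ erefl).
  have -> : mv (mv B1 u x) v u = E :\: mv B1 u y by rewrite eB1 eB2 /mv; ssolve.
  by apply; rewrite /mv !inE; bsimp.
have i3 : good (mv B1 u y) || good (E :\: mv B1 u x).
  have := key (X := mv B1 u y) (a := v) (b := u).
  rewrite card_mv // cB1 => /(_ erefl).
  have -> : mv (mv B1 u y) v u = E :\: mv B1 u x by rewrite eB1 eB2 /mv; ssolve.
  by apply; rewrite /mv !inE; bsimp.
case: (boolP (good (mv B1 u x))) => g1;
  case: (boolP (good (E :\: mv B1 u x))) => g2; try by exists x.
all: case: (boolP (good (mv B1 u y))) => g3;
  case: (boolP (good (E :\: mv B1 u y))) => g4; try by exists y.
all: by move: i1 i2 i3 i4; rewrite ?(negbTE g1) ?(negbTE g2) ?(negbTE g3) ?(negbTE g4).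
Qed.

End Comb.

Lemma dropl_cat (U : Type) n (s1 s2 : seq U) : n <= size s1 -> drop n (s1 ++ s2) = drop n s1 ++ s2.
Proof.
move=> h; rewrite drop_cat; case: ltnP => // h2.
have e : n = size s1 by apply/eqP; rewrite eqn_leq h h2.
by rewrite e subnn drop0 drop_size.
Qed.

Lemma rot_lo (U : Type) (ta tb : seq U) r i : size ta = r -> size tb = r -> i <= r ->
  take r (rot i (ta ++ tb)) = drop i ta ++ take i tb.
Proof.
move=> sa sb hi; rewrite /rot dropl_cat ?sa // takel_cat; last by rewrite size_cat size_drop sa sb leq_addl.
by rewrite take_cat size_drop sa ltnNge leq_subr /= subKn.
Qed.

Lemma rot_hi (U : Type) (ta tb : seq U) r j : size ta = r -> size tb = r -> j < r ->
  take r (rot (r + j) (ta ++ tb)) = drop j tb ++ take j ta.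
Proof.
move=> sa sb hj; rewrite /rot.
have -> : drop (r + j) (ta ++ tb) = drop j tb by rewrite drop_cat sa ltnNge leq_addr /= addKn.
have -> : take (r + j) (ta ++ tb) = ta ++ take j tb by rewrite take_cat sa ltnNge leq_addr /= addKn.
rewrite take_cat size_drop sb ltnNge leq_subr /= subKn ?(ltnW hj) //.
by rewrite takel_cat // sa ltnW.
Qed.

Theorem theorem2p9 (T : finType) (M : matroid T) (r : nat) (B1 B2 : {set T}) :
  sparse_paving M -> mrank M = r ->
  is_basis M B1 -> is_basis M B2 -> [disjoint B1 & B2] ->
  exists s : seq T,
    [/\ uniq s, size s = (r + r)%N,
        [set x in take r s] = B1, [set x in drop r s] = B2 &
        forall i, (i < r + r)%N -> is_basis M [set x in take r (rot i s)]].
Proof.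
move=> hsp hr hB1 hB2 dis.
have cB1 : #|B1| = r by rewrite -hr (mrankE hB1).
have cB2 : #|B2| = r by rewrite -cB1 (basis_card hB2 hB1).
have key : forall (X : {set T}) a b, #|X| = r -> a \in X -> b \notin X ->
    is_basis M X || is_basis M (mv X a b).
  by move=> X a b cX aX bX; apply: (keyM hB1 hsp) => //; rewrite cX.
have [ta [tb [/andP [u1 u2] sz sa sb hk]]] := compB1 hB1 hB2 cB1 cB2 dis key.
have d z : z \in B1 -> z \in B2 -> False.
  by move=> h1 h2; move: (disjointFr dis h1); rewrite h2.
have ma z : (z \in ta) = (z \in B1) by rewrite -[z \in ta](in_set (fun x => x \in ta)) sa !inE andbb.
have mb z : (z \in tb) = (z \in B2).
  rewrite -[z \in tb](in_set (fun x => x \in tb)) sb !inE.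
  case h2: (z \in B2); rewrite ?andbF ?andbT //; case h1: (z \in B1) => //; case: (d z h1 h2).
have sta : size ta = r.
  by rewrite -(card_uniqP u1) -cardsE sa setIid.
have stb : size tb = r by rewrite -sz.
have eB1 : [set x in ta] = B1 by apply/setP => z; rewrite inE ma.
have eB2 : [set x in tb] = B2 by apply/setP => z; rewrite inE mb.
exists (ta ++ tb); split.
- rewrite cat_uniq u1 u2 andbT /=; apply/hasPn => z; rewrite mb ma => h2.
  by apply/negP => h1; apply: (d z h1 h2).
- by rewrite size_cat sta stb.
- by rewrite take_size_cat.
- by rewrite drop_size_cat.
move=> i hi.
have ut z j : z \in take j ta -> z \in drop j ta -> False.
  move=> h1 h2; move: u1; rewrite -(cat_take_drop j ta) cat_uniq => /and3P [_ /hasPn h _].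
  by move: (h z h2); rewrite h1.
have ut' z j : z \in take j tb -> z \in drop j tb -> False.
  move=> h1 h2; move: u2; rewrite -(cat_take_drop j tb) cat_uniq => /and3P [_ /hasPn h _].
  by move: (h z h2); rewrite h1.
have ct z j : (z \in ta) = (z \in take j ta) || (z \in drop j ta).
  by rewrite -mem_cat cat_take_drop.
have ct' z j : (z \in tb) = (z \in take j tb) || (z \in drop j tb).
  by rewrite -mem_cat cat_take_drop.
case: (leqP i r) => hir.
  rewrite rot_lo //.
  have := hk i; rewrite sta => /(_ hir) /andP [g _].
  suff -> : [set x in drop i ta ++ take i tb] = W B2 B1 ta tb i by [].
  apply/setP => z; rewrite /W !inE mem_cat.
  case h1: (z \in B1); case h2: (z \in B2) => //=; try by case: (d z h1 h2).
  all: rewrite ?orbF //.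
have [j ej hj] : exists2 j, i = r + j & j < r.
  by exists (i - r); lia.
rewrite ej rot_hi //.
have := hk j; rewrite sta => /(_ (ltnW hj)) /andP [_ g].
suff -> : [set x in drop j tb ++ take j ta] = (B1 :|: B2) :\: W B2 B1 ta tb j by [].
apply/setP => z; rewrite /W !inE mem_cat.
have := ct z j; have := ct' z j; rewrite ma mb.
have := ut z j; have := ut' z j.
case: (z \in take j ta); case: (z \in drop j ta); case: (z \in take j tb);
  case: (z \in drop j tb); case h1: (z \in B1); case h2: (z \in B2) => //=;
  try (by case: (d z h1 h2));
  by move=> A B C D; (try by case: A); (try by case: B); rewrite ?C ?D.
Qed.
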